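(* Let $g_n := n^{3/2}$ for $n\in\mathbb{N}_0$, and define, for $n\ge 2$, \[ \rho^{(2)}_n := \frac{g_{n-2}-4g_{n-1}+6g_n-4g_{n+1}+g_{n+2}}{g_n} =6-4\Big(1+\tfrac1n\Big)^{3/2}-4\Big(1-\tfrac1n\Big)^{3/2}+\Big(1+\tfrac2n\Big)^{3/2}+\Big(1-\tfrac2n\Big)^{3/2}. \] Then: (i) For all $u\in H_0^2(\mathbb{N}_0)$, \[ \sum_{n=1}^{\infty}\left|(-\Delta u)_n\right|^2\ \ge\ \sum_{n=2}^{\infty}\rho^{(2)}_n|u_n|^2 . \] (ii) (Non-attainability) If $u=\{u_n\}_{n\in\mathbb{N}_0}$ is a complex sequence with $u_0=u_1=0$ such that $\sum_{n=2}^\infty \rho^{(2)}_n|u_n|^2<\infty$ and $\sum_{n=1}^{\infty}|(-\Delta u)_n|^2=\sum_{n=2}^{\infty}\rho^{(2)}_n|u_n|^2$, then $u=0$. (iii) (Optimality near infinity) For every integer $M\ge 2$, \[ \inf_{u\in H_0^M(\mathbb{N}_0)\setminus\{0\}}\frac{\sum_{n=1}^{\infty}|(-\Delta u)_n|^2}{\sum_{n=2}^{\infty}\rho^{(2)}_n|u_n|^2}=1; \] equivalently, for every $M\ge2$ and $\varepsilon>0$ there is a finitely supported nonzero $u\in H_0^M(\mathbb{N}_0)$ with $\sum_{n\ge1}|(-\Delta u)_n|^2<(1+\varepsilon)\sum_{n\ge2}\rho^{(2)}_n|u_n|^2$.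
   Context: For $M\in\mathbb{N}$, $H_0^M(\mathbb{N}_0):=\{u\in\ell^2(\mathbb{N}_0): u_0=\dots=u_{M-1}=0\}$. The discrete Dirichlet Laplacian acts on complex sequences indexed by $\mathbb{N}_0$ by $(-\Delta u)_0=2u_0-u_1$ and $(-\Delta u)_n=-u_{n-1}+2u_n-u_{n+1}$ for $n\in\mathbb{N}$. Note $\rho^{(2)}=((-\Delta)^2 g)/g$ on $n\ge2$. *)

(* Defs.v *)
From Stdlib Require Import Reals.
From Coquelicot Require Import Coquelicot.
Open Scope R_scope.

(* g_n = n^{3/2} (written n * sqrt n, which is exact and gives g_0 = 0) *)
Definition g (n : nat) : R := INR n * sqrt (INR n).

(* rho^{(2)}_n = (g_{n-2} - 4 g_{n-1} + 6 g_n - 4 g_{n+1} + g_{n+2}) / g_n ;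
   only used for n >= 2 *)
Definition rho2 (n : nat) : R :=
  (g (n - 2) - 4 * g (n - 1) + 6 * g n - 4 * g (n + 1) + g (n + 2)) / g n.

(* discrete Dirichlet Laplacian: (-Delta u) *)
Definition mlap (u : nat -> C) (n : nat) : C :=
  match n with
  | O => (2 * u 0%nat - u 1%nat)%C
  | S m => (- u m + 2 * u n - u (S n))%C
  end.

Definition inH0 (M : nat) (u : nat -> C) : Prop :=
  ex_series (fun n => (Cmod (u n))^2) /\ (forall n, (n < M)%nat -> u n = 0%C).

Definition lhs_seq (u : nat -> C) (k : nat) : R := (Cmod (mlap u (S k)))^2.
Definition rhs_seq (u : nat -> C) (k : nat) : R :=
  rho2 (S (S k)) * (Cmod (u (S (S k))))^2.

(* Main.v *)
Require Import Defs.
From Stdlib Require Import Reals Lra Lia Psatz.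
From Coquelicot Require Import Coquelicot.
Open Scope R_scope.


Definition G (s:R) := s * sqrt s.
Definition G1 (s:R) := 3/2 * sqrt s.
Definition G2 (s:R) := 3/4 / sqrt s.
Definition G3 (s:R) := -(3/8) / (s * sqrt s).
Definition G4 (s:R) := 9/16 / (s * s * sqrt s).

Lemma dG t : 0 < t -> is_derive G t (G1 t).
Proof. intros Ht. unfold G, G1. auto_derive. lra.
  assert (0 < sqrt t) by (apply sqrt_lt_R0; lra).
  field_simplify; [|lra]. rewrite <- (sqrt_sqrt t) at 2 by lra. field. lra. Qed.
Lemma dG1 t : 0 < t -> is_derive G1 t (G2 t).
Proof. intros Ht. unfold G1, G2. auto_derive. lra.
  assert (0 < sqrt t) by (apply sqrt_lt_R0; lra). field. lra. Qed.
Lemma dG2 t : 0 < t -> is_derive G2 t (G3 t).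
Proof. intros Ht. unfold G2, G3.
  assert (0 < sqrt t) by (apply sqrt_lt_R0; lra).
  auto_derive. split; [lra|split;[lra|auto]].
  rewrite sqrt_sqrt by lra. field. lra. Qed.
Lemma dG3 t : 0 < t -> is_derive G3 t (G4 t).
Proof. intros Ht. unfold G3, G4.
  assert (0 < sqrt t) by (apply sqrt_lt_R0; lra).
  auto_derive. repeat split; try lra. intro H'. nra.
  assert (Hs : t = sqrt t * sqrt t) by (rewrite sqrt_sqrt; lra).
  set (s := sqrt t) in *. rewrite Hs. field. lra. Qed.

Definition D1 (f : R -> R) (x : R) := f (x + 1) - f x.

Lemma shift_derive (f df : R -> R) (a t : R) : (forall s, 0 < s -> is_derive f s (df s)) -> 0 <= a -> 0 < t ->
  is_derive (fun s => f (s + a)) t (df (t + a)).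
Proof. intros Hd Ha Ht.
  assert (H1 : is_derive (fun s => s + a) t 1) by (auto_derive; [auto| ring]).
  assert (Hf : is_derive f (t + a) (df (t + a))) by (apply Hd; lra).
  pose proof (@is_derive_comp R_AbsRing R_NormedModule f (fun s => s + a) t (df (t+a)) 1 Hf H1) as H.
  change (scal 1 (df (t+a))) with (1 * df (t+a)) in H. rewrite Rmult_1_l in H. exact H. Qed.

Lemma D1_derive (f df : R -> R) : (forall s, 0 < s -> is_derive f s (df s)) ->
  forall s, 0 < s -> is_derive (D1 f) s (D1 df s).
Proof. intros Hd s Hs. unfold D1.
  apply (is_derive_minus (fun s => f (s + 1)) f s). 
  apply shift_derive; auto; lra. apply Hd; auto. Qed.

Lemma D1_mvt (f df : R -> R) (x : R) : 0 < x -> (forall s, 0 < s -> is_derive f s (df s)) ->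
  exists c, x <= c <= x + 1 /\ D1 f x = df c.
Proof. intros Hx Hd.
  destruct (MVT_gen f x (x+1) df) as [c [Hc Heq]].
  - intros y Hy. rewrite Rmin_left in Hy by lra. rewrite Rmax_right in Hy by lra. apply Hd; lra.
  - intros y Hy. rewrite Rmin_left in Hy by lra. rewrite Rmax_right in Hy by lra.
    apply continuity_pt_filterlim. apply (@ex_derive_continuous R_AbsRing R_NormedModule). exists (df y). apply Hd; lra.
  - rewrite Rmin_left in Hc by lra. rewrite Rmax_right in Hc by lra.
    exists c. split; [lra|]. unfold D1. rewrite Heq. ring. Qed.

Lemma G4_chain x : 0 < x -> exists c, x <= c <= x + 4 /\ D1 (D1 (D1 (D1 G))) x = G4 c.
Proof. intros Hx.
  destruct (D1_mvt (D1 (D1 (D1 G))) (D1 (D1 (D1 G1))) x Hx) as [c1 [Hc1 E1]].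
  { do 3 apply D1_derive. apply dG. }
  destruct (D1_mvt (D1 (D1 G1)) (D1 (D1 G2)) c1 ltac:(lra)) as [c2 [Hc2 E2]].
  { do 2 apply D1_derive. apply dG1. }
  destruct (D1_mvt (D1 G2) (D1 G3) c2 ltac:(lra)) as [c3 [Hc3 E3]].
  { apply D1_derive. apply dG2. }
  destruct (D1_mvt G3 G4 c3 ltac:(lra)) as [c4 [Hc4 E4]].
  { apply dG3. }
  exists c4. split; [lra|]. congruence. Qed.

Lemma G3_chain x : 0 < x -> exists c, x <= c <= x + 3 /\ D1 (D1 (D1 G)) x = G3 c.
Proof. intros Hx.
  destruct (D1_mvt (D1 (D1 G)) (D1 (D1 G1)) x Hx) as [c1 [Hc1 E1]].
  { do 2 apply D1_derive. apply dG. }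
  destruct (D1_mvt (D1 G1) (D1 G2) c1 ltac:(lra)) as [c2 [Hc2 E2]].
  { apply D1_derive. apply dG1. }
  destruct (D1_mvt G2 G3 c2 ltac:(lra)) as [c3 [Hc3 E3]].
  { apply dG2. }
  exists c3. split; [lra|]. congruence. Qed.

Lemma G2_chain x : 0 < x -> exists c, x <= c <= x + 2 /\ D1 (D1 G) x = G2 c.
Proof. intros Hx.
  destruct (D1_mvt (D1 G) (D1 G1) x Hx) as [c1 [Hc1 E1]].
  { apply D1_derive. apply dG. }
  destruct (D1_mvt G1 G2 c1 ltac:(lra)) as [c2 [Hc2 E2]].
  { apply dG1. }
  exists c2. split; [lra|]. congruence. Qed.

Lemma sqrt_pos' c : 0 < c -> 0 < sqrt c.
Proof. intros; apply sqrt_lt_R0; lra. Qed.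

Lemma G4_pos c : 0 < c -> 0 < G4 c.
Proof. intros Hc. unfold G4. pose proof (sqrt_pos' c Hc).
  apply Rdiv_lt_0_compat; [lra|]. apply Rmult_lt_0_compat; nra. Qed.
Lemma G3_neg c : 0 < c -> G3 c < 0.
Proof. intros Hc. unfold G3. pose proof (sqrt_pos' c Hc).
  unfold Rdiv. rewrite Ropp_mult_distr_l_reverse. apply Ropp_lt_gt_0_contravar.
  apply Rmult_lt_0_compat; [lra|]. apply Rinv_0_lt_compat. nra. Qed.
Lemma G2_pos c : 0 < c -> 0 < G2 c.
Proof. intros Hc. unfold G2. pose proof (sqrt_pos' c Hc).
  apply Rdiv_lt_0_compat; lra. Qed.

Definition h (n : nat) := g n - g (pred n).
Definition A (n : nat) := 2 * h n - h (pred n) - h (S n).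
Definition w (n : nat) := A n / h n.

Lemma g_G n : g n = G (INR n).
Proof. reflexivity. Qed.

Lemma G_mono a b : 0 <= a < b -> G a < G b.
Proof. intros H. unfold G. assert (sqrt a < sqrt b) by (apply sqrt_lt_1_alt; lra).
  pose proof (sqrt_pos a). nra. Qed.
Lemma G_nonneg a : 0 <= a -> 0 <= G a.
Proof. intros. unfold G. pose proof (sqrt_pos a). nra. Qed.

Lemma g_pos n : (1 <= n)%nat -> 0 < g n.
Proof. intros H. rewrite g_G. replace 0 with (G 0) by (unfold G; ring).
  apply G_mono. pose proof (lt_0_INR n ltac:(lia)). lra. Qed.
Lemma g0 : g 0 = 0.
Proof. unfold g. simpl. ring. Qed.
Lemma g_nonneg n : 0 <= g n.
Proof. apply G_nonneg, pos_INR. Qed.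

Lemma h_pos n : (1 <= n)%nat -> 0 < h n.
Proof. intros H. destruct n as [|m]; [lia|]. unfold h. simpl pred.
  rewrite !g_G. rewrite S_INR. pose proof (G_mono (INR m) (INR m + 1) ltac:(pose proof (pos_INR m); lra)). lra. Qed.

Lemma s2_bounds : 141/100 < sqrt 2 < 142/100.
Proof. pose proof (sqrt_sqrt 2 ltac:(lra)). pose proof (sqrt_pos 2). split; nra. Qed.
Lemma s3_bounds : 173/100 < sqrt 3 < 1733/1000.
Proof. pose proof (sqrt_sqrt 3 ltac:(lra)). pose proof (sqrt_pos 3). split; nra. Qed.
Lemma s4 : sqrt 4 = 2.
Proof. replace 4 with (2*2) by ring. apply sqrt_square. lra. Qed.

Lemma INR_SS m k : INR (m + k) = INR m + INR k.
Proof. apply plus_INR. Qed.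

Lemma D2_nat m : h (S (S m)) - h (S m) = D1 (D1 G) (INR m).
Proof. unfold h, D1. simpl pred. rewrite !g_G, !S_INR. ring. Qed.
Lemma D3_nat m : A (S (S m)) = - D1 (D1 (D1 G)) (INR m).
Proof. unfold A, h, D1. simpl pred. rewrite !g_G, !S_INR. ring. Qed.
Lemma rho_nat m : rho2 (S (S m)) * g (S (S m)) = D1 (D1 (D1 (D1 G))) (INR m).
Proof. unfold rho2. replace (S (S m) - 2)%nat with m by lia.
  replace (S (S m) - 1)%nat with (S m) by lia.
  replace (S (S m) + 1)%nat with (S (S (S m))) by lia.
  replace (S (S m) + 2)%nat with (S (S (S (S m)))) by lia.
  field_simplify. 2:{ pose proof (g_pos (S (S m)) ltac:(lia)). lra. }
  unfold D1. rewrite !g_G, !S_INR. ring. Qed.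

Ltac num_sq := pose proof s2_bounds; pose proof s3_bounds; pose proof s4.

Lemma h_incr m : h (S m) <= h (S (S m)).
Proof. cut (0 <= D1 (D1 G) (INR m)). { rewrite <- D2_nat. lra. }
  destruct m as [|m].
  - unfold D1, G. simpl INR. replace (0+1+1) with 2 by ring. replace (0+1) with 1 by ring.
    rewrite sqrt_1, sqrt_0. num_sq. lra.
  - pose proof (lt_0_INR (S m) ltac:(lia)).
    destruct (G2_chain (INR (S m)) H) as [c [Hc E]]. rewrite E. apply Rlt_le, G2_pos. lra. Qed.

Lemma A_pos m : 0 < A (S (S m)).
Proof. rewrite D3_nat. cut (D1 (D1 (D1 G)) (INR m) < 0). lra.
  destruct m as [|m].
  - unfold D1, G. simpl INR. replace (0+1+1+1) with 3 by ring. replace (0+1+1) with 2 by ring.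
    replace (0+1) with 1 by ring. rewrite sqrt_1, sqrt_0. num_sq. lra.
  - pose proof (lt_0_INR (S m) ltac:(lia)).
    destruct (G3_chain (INR (S m)) H) as [c [Hc E]]. rewrite E. apply G3_neg. lra. Qed.

Lemma rho_pos m : 0 < rho2 (S (S m)).
Proof. pose proof (g_pos (S (S m)) ltac:(lia)).
  cut (0 < rho2 (S (S m)) * g (S (S m))). { intros. nra. }
  rewrite rho_nat. destruct m as [|m].
  - unfold D1, G. simpl INR. replace (0+1+1+1+1) with 4 by ring. replace (0+1+1+1) with 3 by ring. replace (0+1+1) with 2 by ring.
    replace (0+1) with 1 by ring. rewrite sqrt_1, sqrt_0. num_sq. lra.
  - pose proof (lt_0_INR (S m) ltac:(lia)).
    destruct (G4_chain (INR (S m)) H0) as [c [Hc E]]. rewrite E. apply G4_pos. lra. Qed.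

Lemma w_pos m : 0 < w (S (S m)).
Proof. unfold w. apply Rdiv_lt_0_compat. apply A_pos. apply h_pos. lia. Qed.

Lemma rho_A m : rho2 (S (S m)) * g (S (S m)) = A (S (S m)) - A (S (S (S m))).
Proof. rewrite rho_nat. unfold A, h, D1. simpl pred. rewrite !g_G, !S_INR. ring. Qed.
Lemma alg (xm x0 xp gm g0 gp hm A1 : R) : gm <> 0 -> g0 <> 0 -> g0 - gm <> 0 -> gp - g0 <> 0 ->
 (-xm + 2*x0 - xp)^2 = ((2*(g0-gm) - hm - (gp-g0)) - A1)/g0 * x0^2
  + (g0-gm)*(gp-g0)*((x0 - xm)/(g0-gm) - (xp - x0)/(gp-g0))^2
  + (2*(g0-gm) - hm - (gp-g0))/(g0-gm) * g0 * gm * (x0/g0 - xm/gm)^2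
  + ((1 - (g0-gm)/(gp-g0))*(xp - x0)^2 - (1 - hm/(g0-gm))*(x0 - xm)^2)
  + (A1/(gp-g0) * (gp/g0 - 1) * x0^2 - (2*(g0-gm) - hm - (gp-g0))/(g0-gm) * (g0/gm - 1) * xm^2).
Proof. intros. field. repeat split; auto. Qed.

Fixpoint sm (f : nat -> R) (n : nat) : R :=
  match n with O => 0 | S k => sm f k + f k end.

Definition L (x : nat -> R) n := - x (pred n) + 2 * x n - x (S n).
Definition v (x : nat -> R) n := x n - x (pred n).
Definition P (x : nat -> R) n := h n * h (S n) * (v x n / h n - v x (S n) / h (S n))^2.
Definition Q (x : nat -> R) n := w n * g n * g (pred n) * (x n / g n - x (pred n) / g (pred n))^2.
Definition B (x : nat -> R) p := (1 - h (S p) / h (S (S p))) * (v x (S (S p)))^2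
   + w (S (S p)) * (g (S (S p)) / g (S p) - 1) * (x (S p))^2.

Lemma sm_S f n : sm f (S n) = sm f n + f n.
Proof. reflexivity. Qed.

Lemma hS m : h (S m) = g (S m) - g m.
Proof. reflexivity. Qed.
Lemma A_SS m : A (S (S m)) = 2*(g (S (S m)) - g (S m)) - h (S m) - (g (S (S (S m))) - g (S (S m))).
Proof. reflexivity. Qed.
Lemma rho_AA m : rho2 (S (S m)) = (A (S (S m)) - A (S (S (S m)))) / g (S (S m)).
Proof. pose proof (g_pos (S (S m)) ltac:(lia)). rewrite <- rho_A. field. lra. Qed.

Lemma identity (x : nat -> R) : x 0%nat = 0 -> x 1%nat = 0 -> forall p,
  sm (fun k => (L x (S k))^2) (S p) =
  sm (fun k => rho2 (S (S k)) * x (S (S k))^2) p + sm (fun k => P x (S (S k))) p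
  + sm (fun k => Q x (S (S k))) p + h 1 / h 2 * (v x 2)^2 + B x p.
Proof. intros H0 H1 p. induction p as [|p IH].
  - simpl. unfold L, v, B, v. simpl pred. rewrite H0, H1. 
    pose proof (h_pos 2 ltac:(lia)). pose proof (g_pos 1 ltac:(lia)). field. split; lra.
  - change (sm (fun k => (L x (S k))^2) (S (S p))) with
      (sm (fun k => (L x (S k))^2) (S p) + (L x (S (S p)))^2).
    rewrite IH. rewrite !(sm_S _ p).
    assert (E : (L x (S (S p)))^2 = rho2 (S (S p)) * x (S (S p))^2 + P x (S (S p)) + Q x (S (S p)) + B x (S p) - B x p).
    { unfold L, P, Q, B, v, w. simpl pred. rewrite rho_AA. rewrite (A_SS p).
      rewrite (hS (S p)), (hS (S (S p))).
      pose proof (g_pos (S p) ltac:(lia)) as Ga. pose proof (g_pos (S (S p)) ltac:(lia)) as Gb.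
      pose proof (h_pos (S (S p)) ltac:(lia)) as Ha. pose proof (h_pos (S (S (S p))) ltac:(lia)) as Hb.
      rewrite (hS (S p)) in Ha. rewrite (hS (S (S p))) in Hb.
      rewrite (alg (x (S p)) (x (S (S p))) (x (S (S (S p)))) (g (S p)) (g (S (S p))) (g (S (S (S p)))) (h (S p)) (A (S (S (S p))))); try lra.
      }
    rewrite E. ring. Qed.

Lemma sm_nn f n : (forall k, 0 <= f k) -> 0 <= sm f n.
Proof. intros H. induction n; simpl; [lra|]. pose proof (H n). lra. Qed.
Lemma sm_ge_term f n k : (forall j, 0 <= f j) -> (k < n)%nat -> f k <= sm f n.
Proof. intros H Hk. induction n; [lia|]. simpl.
  destruct (Nat.eq_dec k n) as [->|Hne].
  - pose proof (sm_nn f n H). lra.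
  - pose proof (H n). assert (f k <= sm f n) by (apply IHn; lia). lra. Qed.
Lemma sm_ext f1 f2 n : (forall k, f1 k = f2 k) -> sm f1 n = sm f2 n.
Proof. intros H. induction n; simpl; [auto|]. rewrite IHn, H. auto. Qed.
Lemma sm_plus f1 f2 n : sm (fun k => f1 k + f2 k) n = sm f1 n + sm f2 n.
Proof. induction n; simpl; [ring|]. rewrite IHn. ring. Qed.
Lemma sm_scal c f n : sm (fun k => c * f k) n = c * sm f n.
Proof. induction n; simpl; [ring|]. rewrite IHn. ring. Qed.
Lemma sm_le f1 f2 n : (forall k, f1 k <= f2 k) -> sm f1 n <= sm f2 n.
Proof. intros H. induction n; simpl; [lra|]. pose proof (H n). lra. Qed.

Lemma P_nn x k : 0 <= P x (S (S k)).
Proof. unfold P. pose proof (h_pos (S (S k)) ltac:(lia)). pose proof (h_pos (S (S (S k))) ltac:(lia)).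
  apply Rmult_le_pos; [nra|]. apply pow2_ge_0. Qed.
Lemma wgg_pos k : 0 < w (S (S k)) * g (S (S k)) * g (pred (S (S k))).
Proof. simpl pred. pose proof (w_pos k). pose proof (g_pos (S (S k)) ltac:(lia)).
  pose proof (g_pos (S k) ltac:(lia)). apply Rmult_lt_0_compat; [|auto]. nra. Qed.
Lemma Q_nn x k : 0 <= Q x (S (S k)).
Proof. unfold Q. pose proof (wgg_pos k). apply Rmult_le_pos; [lra|]. apply pow2_ge_0. Qed.
Lemma B_nn x p : 0 <= B x p.
Proof. unfold B. pose proof (h_pos (S p) ltac:(lia)). pose proof (h_pos (S (S p)) ltac:(lia)).
  pose proof (h_incr p). pose proof (w_pos p).
  pose proof (g_pos (S p) ltac:(lia)). pose proof (g_pos (S (S p)) ltac:(lia)).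
  assert (g (S p) <= g (S (S p))) by (rewrite (hS (S p)) in *; lra).
  apply Rplus_le_le_0_compat; apply Rmult_le_pos; try apply pow2_ge_0.
  - assert (h (S p) / h (S (S p)) <= 1). { apply (Rmult_le_reg_r (h (S (S p)))); auto.
      field_simplify; lra. } lra.
  - apply Rmult_le_pos; [lra|]. assert (1 <= g (S (S p)) / g (S p)).
    { apply (Rmult_le_reg_r (g (S p))); auto. field_simplify; lra. } lra. Qed.
Lemma extra_nn x : 0 <= h 1 / h 2 * (v x 2)^2.
Proof. pose proof (h_pos 1 ltac:(lia)). pose proof (h_pos 2 ltac:(lia)).
  apply Rmult_le_pos; [|apply pow2_ge_0]. apply Rlt_le, Rdiv_lt_0_compat; auto. Qed.

Lemma main_ineq x : x 0%nat = 0 -> x 1%nat = 0 -> forall p k, (k < p)%nat ->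
  sm (fun k => rho2 (S (S k)) * x (S (S k))^2) p + Q x (S (S k)) <= sm (fun k => (L x (S k))^2) (S p).
Proof. intros H0 H1 p k Hk. rewrite (identity x H0 H1 p).
  pose proof (sm_ge_term (fun k => Q x (S (S k))) p k (Q_nn x) Hk).
  pose proof (sm_nn (fun k => P x (S (S k))) p (P_nn x)).
  pose proof (extra_nn x). pose proof (B_nn x p). simpl in H. lra. Qed.
Lemma main_ineq0 x : x 0%nat = 0 -> x 1%nat = 0 -> forall p,
  sm (fun k => rho2 (S (S k)) * x (S (S k))^2) p <= sm (fun k => (L x (S k))^2) (S p).
Proof. intros H0 H1 p. rewrite (identity x H0 H1 p).
  pose proof (sm_nn (fun k => Q x (S (S k))) p (Q_nn x)).
  pose proof (sm_nn (fun k => P x (S (S k))) p (P_nn x)).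
  pose proof (extra_nn x). pose proof (B_nn x p). lra. Qed.

Definition re (u : nat -> C) n := fst (u n).
Definition im (u : nat -> C) n := snd (u n).

Lemma lhs_split (u : nat -> C) k : lhs_seq u k = (L (re u) (S k))^2 + (L (im u) (S k))^2.
Proof. unfold lhs_seq. rewrite Cmod2_alt. unfold mlap, L, re, im. simpl pred.
  unfold Re, Im. simpl. ring. Qed.
Lemma rhs_split (u : nat -> C) k : rhs_seq u k = rho2 (S (S k)) * re u (S (S k))^2 + rho2 (S (S k)) * im u (S (S k))^2.
Proof. unfold rhs_seq. rewrite Cmod2_alt. unfold re, im, Re, Im. ring. Qed.

Lemma sum_n_sm (a : nat -> R) N : sum_n a N = sm a (S N).
Proof. induction N. rewrite sum_O. simpl. change (a 0%nat = 0 + a 0%nat). ring.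
  rewrite sum_Sn, IHN. reflexivity. Qed.

Lemma series_lim (a : nat -> R) (l : R) : is_series a l -> is_lim_seq (sum_n a) l.
Proof. intros H. exact H. Qed.
Lemma lim_series (a : nat -> R) (l : R) : is_lim_seq (sum_n a) l -> is_series a l.
Proof. intros H. exact H. Qed.

Lemma ps_le_lim (a : nat -> R) (l : R) N : (forall k, 0 <= a k) -> is_series a l -> sum_n a N <= l.
Proof. intros Ha H. apply series_lim in H.
  assert (H2 : is_lim_seq (fun m => sum_n a (m + N)) l) by (apply is_lim_seq_incr_n; auto).
  assert (Hm : forall m, sum_n a N <= sum_n a (m + N)).
  { intros m. rewrite !sum_n_sm. induction m. simpl. lra.
    replace (S (S m + N)) with (S (S (m + N))) by lia. simpl sm. simpl sm in IHm. pose proof (Ha (S (m+N))). lra. }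
  pose proof (is_lim_seq_le (fun _ => sum_n a N) (fun m => sum_n a (m + N)) (sum_n a N) l Hm (is_lim_seq_const _) H2).
  simpl in H0. auto. Qed.

Lemma u01 (u : nat -> C) : inH0 2 u -> u 0%nat = 0%C /\ u 1%nat = 0%C.
Proof. intros [_ H]. split; apply H; lia. Qed.

Lemma re0 (u : nat -> C) n : u n = 0%C -> re u n = 0.
Proof. intros H. unfold re. rewrite H. reflexivity. Qed.
Lemma im0 (u : nat -> C) n : u n = 0%C -> im u n = 0.
Proof. intros H. unfold im. rewrite H. reflexivity. Qed.

Lemma partial_ineq (u : nat -> C) : u 0%nat = 0%C -> u 1%nat = 0%C -> forall N,
  sum_n (rhs_seq u) N <= sum_n (lhs_seq u) (S N).
Proof. intros H0 H1 N. rewrite !sum_n_sm.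
  rewrite (sm_ext _ _ _ (rhs_split u)), (sm_ext _ _ _ (lhs_split u)), !sm_plus.
  pose proof (main_ineq0 (re u) (re0 u 0 H0) (re0 u 1 H1) (S N)).
  pose proof (main_ineq0 (im u) (im0 u 0 H0) (im0 u 1 H1) (S N)). lra. Qed.

Lemma rhs_nn (u : nat -> C) k : 0 <= rhs_seq u k.
Proof. unfold rhs_seq. pose proof (rho_pos k). apply Rmult_le_pos; [lra|]. apply pow2_ge_0. Qed.
Lemma lhs_nn (u : nat -> C) k : 0 <= lhs_seq u k.
Proof. unfold lhs_seq. apply pow2_ge_0. Qed.

Lemma sq3 a b c : (a + b + c)^2 <= 3 * (a^2 + b^2 + c^2).
Proof. cut (0 <= 3 * (a^2 + b^2 + c^2) - (a + b + c)^2). lra.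
  replace (3 * (a^2 + b^2 + c^2) - (a + b + c)^2) with ((a-b)^2 + (b-c)^2 + (a-c)^2) by ring.
  pose proof (pow2_ge_0 (a-b)). pose proof (pow2_ge_0 (b-c)). pose proof (pow2_ge_0 (a-c)). lra. Qed.

Lemma lhs_ex (u : nat -> C) : ex_series (fun n => (Cmod (u n))^2) -> ex_series (lhs_seq u).
Proof. intros H.
  set (c := fun n => (Cmod (u n))^2) in *.
  apply (@ex_series_le R_AbsRing R_CompleteNormedModule _ (fun k => 3 * (c k + 4 * c (S k) + c (S (S k))))).
  - intros k. change (norm (lhs_seq u k)) with (Rabs (lhs_seq u k)).
    rewrite Rabs_pos_eq by apply lhs_nn. rewrite lhs_split. unfold c. rewrite !Cmod2_alt.
    unfold L, re, im, Re, Im. simpl pred.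
    pose proof (sq3 (- fst (u k)) (2 * fst (u (S k))) (- fst (u (S (S k))))).
    pose proof (sq3 (- snd (u k)) (2 * snd (u (S k))) (- snd (u (S (S k))))). nra.
  - apply (ex_series_ext (fun k => scal 3 (plus (plus (c k) (scal 4 (c (S k)))) (c (S (S k)))))).
    { intros; reflexivity. }
    apply (@ex_series_scal R_AbsRing R_NormedModule). apply (@ex_series_plus R_AbsRing R_NormedModule). apply (@ex_series_plus R_AbsRing R_NormedModule). auto.
    apply (@ex_series_scal R_AbsRing R_NormedModule). apply (ex_series_incr_1 c). auto.
    apply (ex_series_incr_1 (fun k => c (S k))). apply (ex_series_incr_1 c). auto. Qed.

Lemma part_i : forall u : nat -> C, inH0 2 u -> Series (lhs_seq u) >= Series (rhs_seq u).
Proof. intros u Hu. destruct (u01 u Hu) as [H0 H1].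
  assert (Hl : ex_series (lhs_seq u)) by (apply lhs_ex; apply Hu).
  set (SL := Series (lhs_seq u)).
  assert (HL : is_series (lhs_seq u) SL) by (apply Series_correct; auto).
  assert (Hb : forall N, sum_n (rhs_seq u) N <= SL).
  { intros N. apply (Rle_trans _ _ _ (partial_ineq u H0 H1 N)). apply ps_le_lim; auto. apply lhs_nn. }
  assert (Hr : ex_series (rhs_seq u)).
  { destruct (ex_finite_lim_seq_incr (sum_n (rhs_seq u)) SL) as [l Hl'].
    - intros n. rewrite sum_Sn. pose proof (rhs_nn u (S n)). change (plus (sum_n (rhs_seq u) n) (rhs_seq u (S n))) with (sum_n (rhs_seq u) n + rhs_seq u (S n)). lra.
    - auto.
    - exists l. apply lim_series. auto. }
  assert (HR : is_series (rhs_seq u) (Series (rhs_seq u))) by (apply Series_correct; auto).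
  apply series_lim in HL. apply series_lim in HR.
  apply is_lim_seq_incr_1 in HL.
  pose proof (is_lim_seq_le _ _ _ _ (partial_ineq u H0 H1) HR HL). simpl in H. lra. Qed.

Lemma Q_zero x k : Q x (S (S k)) = 0 -> x (S (S k)) / g (S (S k)) = x (S k) / g (S k).
Proof. intros H. unfold Q in H. pose proof (wgg_pos k). simpl pred in *.
  assert (E : (x (S (S k)) / g (S (S k)) - x (S k) / g (S k))^2 = 0).
  { apply (Rmult_eq_reg_l (w (S (S k)) * g (S (S k)) * g (S k))); [|lra]. rewrite H. ring. }
  assert (Hz : forall y, y^2 = 0 -> y = 0) by (intros y Hy; nra). apply Hz in E. lra. Qed.

Lemma zero_from_Q x : x 1%nat = 0 -> (forall k, Q x (S (S k)) = 0) -> forall n, x (S n) = 0.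
Proof. intros H1 HQ n. induction n; auto.
  pose proof (Q_zero x n (HQ n)). rewrite IHn in H. pose proof (g_pos (S (S n)) ltac:(lia)).
  unfold Rdiv in H. rewrite Rmult_0_l in H.
  apply (Rmult_eq_reg_r (/ g (S (S n)))). lra. apply Rgt_not_eq, Rinv_0_lt_compat; auto. Qed.

Lemma part_ii : forall u : nat -> C, u 0%nat = 0%C -> u 1%nat = 0%C ->
     ex_series (rhs_seq u) -> is_series (lhs_seq u) (Series (rhs_seq u)) -> forall n, u n = 0%C.
Proof. intros u H0 H1 Hr Hl.
  pose proof (Series_correct _ Hr) as HR.
  apply series_lim in HR. apply series_lim in Hl. apply is_lim_seq_incr_1 in Hl.
  pose proof (is_lim_seq_minus' _ _ _ _ Hl HR) as HD. rewrite Rminus_eq_0 in HD.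
  assert (HQ : forall k, Q (re u) (S (S k)) + Q (im u) (S (S k)) = 0).
  { intros k. apply (is_lim_seq_incr_n _ k) in HD.
    assert (Hle : forall N, Q (re u) (S (S k)) + Q (im u) (S (S k)) <=
       sum_n (lhs_seq u) (S (N + k)) - sum_n (rhs_seq u) (N + k)).
    { intros N. rewrite !sum_n_sm.
      rewrite (sm_ext _ _ _ (rhs_split u)), (sm_ext _ _ _ (lhs_split u)), !sm_plus.
      pose proof (main_ineq (re u) (re0 u 0 H0) (re0 u 1 H1) (S (N + k)) k ltac:(lia)).
      pose proof (main_ineq (im u) (im0 u 0 H0) (im0 u 1 H1) (S (N + k)) k ltac:(lia)). lra. }
    pose proof (is_lim_seq_le _ _ _ _ Hle (is_lim_seq_const _) HD). simpl in H.
    pose proof (Q_nn (re u) k). pose proof (Q_nn (im u) k). lra. }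
  assert (Hre : forall n, re u (S n) = 0).
  { apply zero_from_Q. apply re0; auto. intros k. pose proof (HQ k).
    pose proof (Q_nn (re u) k). pose proof (Q_nn (im u) k). lra. }
  assert (Him : forall n, im u (S n) = 0).
  { apply zero_from_Q. apply im0; auto. intros k. pose proof (HQ k).
    pose proof (Q_nn (re u) k). pose proof (Q_nn (im u) k). lra. }
  intros [|n]; auto. specialize (Hre n). specialize (Him n). unfold re, im in *.
  destruct (u (S n)) as [a b]. simpl in *. subst. reflexivity. Qed.


Lemma sq_facts y : 0 <= y -> sqrt y * sqrt y = y /\ 0 <= sqrt y.
Proof. intros. split. apply sqrt_sqrt; auto. apply sqrt_pos. Qed.

Lemma h_bounds m : (3/4) * sqrt (INR (S m)) <= h (S m) <= 2 * sqrt (INR (S m)).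
Proof. unfold h. simpl pred. rewrite !g_G. unfold G. rewrite S_INR.
  pose proof (pos_INR m) as Hy. set (y := INR m) in *.
  destruct (sq_facts (y+1) ltac:(lra)) as [Hs Hs0].
  destruct (sq_facts y ltac:(lra)) as [Ht Ht0].
  assert (Hst : sqrt y <= sqrt (y+1)) by (apply sqrt_le_1_alt; lra).
  set (s := sqrt (y+1)) in *. set (t := sqrt y) in *.
  replace (y+1) with (s*s) by lra. replace y with (t*t) by lra.
  assert (E1 : s*s*s - t*t*t - (3/4)*s*(s*s - t*t) = (s-t)*((1/4)*s*s + (1/4)*s*t + t*t)) by field.
  assert (E2 : 2*s*(s*s-t*t) - (s*s*s - t*t*t) = (s-t)*(s*s + s*t - t*t)) by ring.
  assert (0 <= (s-t)*((1/4)*s*s + (1/4)*s*t + t*t)) by (apply Rmult_le_pos; nra).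
  assert (0 <= (s-t)*(s*s + s*t - t*t)) by (apply Rmult_le_pos; nra).
  assert (s*s - t*t = 1) by lra.
  rewrite H1 in E1, E2. split; nra. Qed.

Lemma e_le m : g (S m) / h (S m) <= (4/3) * INR (S m).
Proof. destruct (h_bounds m) as [H1 _].
  pose proof (lt_0_INR (S m) ltac:(lia)).
  pose proof (sqrt_pos' _ H).
  assert (0 < h (S m)) by (apply h_pos; lia).
  apply (Rmult_le_reg_r (h (S m))); auto. unfold Rdiv. rewrite Rmult_assoc, Rinv_l by lra.
  rewrite g_G. unfold G. nra. Qed.

Lemma e_diff m : Rabs (g (S (S m)) / h (S (S m)) - g (S m) / h (S m)) <= 4.
Proof.
  pose proof (h_pos (S m) ltac:(lia)) as Hh1. pose proof (h_pos (S (S m)) ltac:(lia)) as Hh2.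
  destruct (h_bounds m) as [Hb1 _]. destruct (h_bounds (S m)) as [Hb2 _].
  replace (g (S (S m)) / h (S (S m)) - g (S m) / h (S m)) with
    ((g (S m) * g (S m) - g (S (S m)) * g m) / (h (S m) * h (S (S m)))).
  2:{ field_simplify; try lra. unfold h. simpl pred. field. unfold h in Hh1, Hh2. simpl pred in *. split; lra. }
  rewrite Rabs_div by nra. rewrite (Rabs_pos_eq (h (S m) * h (S (S m)))) by nra.
  apply Rle_div_l; [nra|].
  rewrite !g_G. unfold G. rewrite !S_INR. repeat rewrite S_INR in Hb1. repeat rewrite S_INR in Hb2.
  pose proof (pos_INR m) as Hy0. set (z := INR m) in *.
  destruct (sq_facts z ltac:(lra)) as [Ha Ha0].
  destruct (sq_facts (z+1) ltac:(lra)) as [Hs Hs0].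
  destruct (sq_facts (z+1+1) ltac:(lra)) as [Hc Hc0].
  assert (Hsc : sqrt (z+1) <= sqrt (z+1+1)) by (apply sqrt_le_1_alt; lra).
  set (a := sqrt z) in *. set (s := sqrt (z+1)) in *. set (c := sqrt (z+1+1)) in *.
  assert (Hr2 : (a*c)*(a*c) = z*(z+2)) by (replace (a*c*(a*c)) with ((a*a)*(c*c)) by ring; nra).
  assert (Hr0 : 0 <= a*c) by nra.
  assert (Hry : a*c <= z+1) by nra.
  set (r := a*c) in *.
  replace ((z + 1) * s * ((z + 1) * s) - (z + 1 + 1) * c * (z * a)) with ((z+1)*(z+1)*(z+1) - z*(z+2)*r).
  2:{ unfold r. replace ((z + 1) * s * ((z + 1) * s)) with ((z+1)*(z+1)*(s*s)) by ring. rewrite Hs. ring. }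
  assert (Hlow : 0 <= (z+1)*(z+1)*(z+1) - z*(z+2)*r) by nra.
  assert (Hm0 : 0 <= z*(z+2)*r*((z+1) - r)) by (repeat apply Rmult_le_pos; lra).
  assert (Hm1 : z*(z+2)*r*(z+1) >= z*(z+2)*r*r) by nra.
  assert (Hm2 : z*(z+2)*r*r = (z*(z+2))*(z*(z+2))) by (rewrite Rmult_assoc, Hr2; ring).
  assert (Hup0 : (z+1) * ((z+1)*(z+1)*(z+1) - z*(z+2)*r) <= (z+1) * (2*(z+1))) by nra.
  assert (Hup' : (z+1)*(z+1)*(z+1) - z*(z+2)*r <= 2*(z+1)).
  { apply (Rmult_le_reg_l (z+1)); lra. }
  rewrite Rabs_pos_eq by lra.
  assert (s * c >= z+1) by nra.
  assert (h (S m) * h (S (S m)) >= (9/16) * (s*c)).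
  { assert (0 <= (h (S m) - 3/4*s) * h (S (S m))) by (apply Rmult_le_pos; lra).
    assert (0 <= 3/4 * s * (h (S (S m)) - 3/4*c))  by (apply Rmult_le_pos; lra). nra. }
  lra. Qed.

Lemma sqrt_ge_half y c : 0 <= y -> y / 4 <= c -> sqrt y / 2 <= sqrt c.
Proof. intros Hy Hc. destruct (sq_facts y Hy) as [H1 H2]. destruct (sq_facts c ltac:(lra)) as [H3 H4].
  destruct (Rle_lt_dec (sqrt y / 2) (sqrt c)); auto. nra. Qed.
Lemma sqrt_le_double y c : 0 <= c -> c <= 4 * y -> 0 <= y -> sqrt c <= 2 * sqrt y.
Proof. intros Hc Hcy Hy. destruct (sq_facts y Hy) as [H1 H2]. destruct (sq_facts c Hc) as [H3 H4].
  destruct (Rle_lt_dec (sqrt c) (2 * sqrt y)); auto. nra. Qed.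

Lemma w_bound m : (2 <= m)%nat -> w (S (S m)) * g (S (S m)) * g (S m) <= 2 * INR (S (S m)).
Proof. intros Hm.
  assert (Hm' : 2 <= INR m) by (replace 2 with (INR 2) by (simpl; ring); apply le_INR; auto).
  destruct (G3_chain (INR m) ltac:(lra)) as [c [Hc E]].
  pose proof (D3_nat m) as HA. rewrite E in HA. unfold G3 in HA.
  assert (Hy : INR (S (S m)) = INR m + 2) by (rewrite !S_INR; ring).
  set (y := INR (S (S m))) in *.
  destruct (sq_facts y ltac:(lra)) as [Hs Hs0].
  destruct (sq_facts c ltac:(lra)) as [Hc2 Hc0].
  pose proof (sqrt_ge_half y c ltac:(lra) ltac:(lra)) as Hsc.
  set (s := sqrt y) in *. set (sc := sqrt c) in *.
  assert (Hcc : c * sc >= y * s / 4) by nra.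
  assert (HA' : A (S (S m)) * (c * sc) = 3/8).
  { rewrite HA. field. split; nra. }
  pose proof (A_pos m) as HA0.
  assert (HAy : A (S (S m)) * (y * s) <= 3/2) by nra.
  pose proof (h_bounds (S m)) as [Hh _]. fold y in Hh. fold s in Hh.
  pose proof (h_pos (S (S m)) ltac:(lia)) as Hh0.
  assert (Hg : g (S (S m)) = y * s) by reflexivity.
  assert (Hg' : 0 <= g (S m) <= g (S (S m))).
  { split. apply g_nonneg. pose proof Hh0. unfold h in H. simpl pred in H. lra. }
  set (X := w (S (S m)) * g (S (S m)) * g (S m)).
  assert (HX : X * h (S (S m)) = A (S (S m)) * g (S (S m)) * g (S m)).
  { unfold X, w. field. lra. }
  assert (HX0 : 0 <= X).
  { unfold X. pose proof (w_pos m). pose proof (g_pos (S (S m)) ltac:(lia)). apply Rmult_le_pos; [nra|lra]. }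
  assert (HX1 : A (S (S m)) * g (S (S m)) * g (S m) <= A (S (S m)) * (y*s) * (y*s)).
  { rewrite Hg in *. apply Rmult_le_compat_l; [nra|lra]. }
  assert (HX2 : X * (3/4 * s) <= 3/2 * (y * s)).
  { assert (X * (3/4*s) <= X * h (S (S m))) by (apply Rmult_le_compat_l; lra). nra. }
  assert (Hs1 : 0 < s) by (apply sqrt_pos'; lra).
  nra. Qed.

Lemma rho_lower m : (1 <= m)%nat -> rho2 (S (S m)) * g (S (S m))^2 >= (9/128) / INR (S (S m)).
Proof. intros Hm.
  assert (Hm' : 1 <= INR m) by (replace 1 with (INR 1) by (simpl; ring); apply le_INR; auto).
  destruct (G4_chain (INR m) ltac:(lra)) as [c [Hc E]].
  pose proof (rho_nat m) as HR. rewrite E in HR. unfold G4 in HR.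
  assert (Hy : INR (S (S m)) = INR m + 2) by (rewrite !S_INR; ring).
  assert (Hg : g (S (S m)) = INR (S (S m)) * sqrt (INR (S (S m)))) by reflexivity.
  set (y := INR (S (S m))) in *.
  destruct (sq_facts y ltac:(lra)) as [Hs Hs0].
  destruct (sq_facts c ltac:(lra)) as [Hc2 Hc0].
  pose proof (sqrt_le_double y c ltac:(lra) ltac:(lra) ltac:(lra)) as Hsc.
  set (s := sqrt y) in *. set (sc := sqrt c) in *.
  assert (Hs1 : 0 < s) by (apply sqrt_pos'; lra).
  assert (Hsc1 : 0 < sc) by (apply sqrt_pos'; lra).
  assert (Hcc : 0 < c * c * sc) by (apply Rmult_lt_0_compat; nra).
  replace (rho2 (S (S m)) * g (S (S m))^2) with ((rho2 (S (S m)) * g (S (S m))) * g (S (S m))) by ring.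
  rewrite HR, Hg. 
  assert (Hb : c * c * sc <= 8 * (y * y * s)).
  { assert (c*c <= 4*(y*y)) by nra. nra. }
  apply Rle_ge.
  apply (Rmult_le_reg_r (y * (c*c*sc))). nra.
  replace (9/128 / y * (y * (c*c*sc))) with (9/128 * (c*c*sc)) by (field; lra).
  replace (9/16 / (c * c * sc) * (y * s) * (y * (c * c * sc))) with (9/16 * (y*y*s)) by (field; lra).
  lra. Qed.


Definition qf (K n : nat) : R :=
  if (n <=? K)%nat then 0
  else if (n <=? 2*K)%nat then (INR n - INR K)*(INR n - INR K + 1)
  else if (n <=? 3*K)%nat then 2*INR K*(INR K+1) - (3*INR K - INR n)*(3*INR K - INR n + 1)
  else 2*INR K*(INR K+1).

Ltac conv_nat :=
  repeat match goal with
  | H : (?a < ?b)%nat |- _ => change (S a <= b)%nat in H; apply le_INR in H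
  | H : (?a <= ?b)%nat |- _ => apply le_INR in H
  end;
  repeat rewrite S_INR in *; repeat rewrite mult_INR in *; simpl INR in *.

Lemma dq K i : (1 <= K)%nat -> qf K (S i) - qf K i =
  if (S i <=? K)%nat then 0 else if (S i <=? 2*K)%nat then 2*(INR (S i) - INR K)
  else if (S i <=? 3*K)%nat then 2*(3*INR K - INR (S i) + 1) else 0.
Proof. intros HK. unfold qf.
  destruct (Nat.leb_spec (S i) K); destruct (Nat.leb_spec i K);
  destruct (Nat.leb_spec (S i) (2*K)); destruct (Nat.leb_spec i (2*K));
  destruct (Nat.leb_spec (S i) (3*K)); destruct (Nat.leb_spec i (3*K));
  try lia; conv_nat; try nra.
Qed.

Lemma dq_bound K i : (1 <= K)%nat -> Rabs (qf K (S i) - qf K i) <= 2 * INR K.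
Proof. intros HK. rewrite dq by auto. pose proof (le_INR _ _ HK). simpl INR in H.
  destruct (Nat.leb_spec (S i) K); destruct (Nat.leb_spec (S i) (2*K));
  destruct (Nat.leb_spec (S i) (3*K)); try lia; conv_nat; apply Rabs_le; split; lra.
Qed.

Lemma d2q_bound K i : (1 <= K)%nat ->
  Rabs ((qf K (S (S i)) - qf K (S i)) - (qf K (S i) - qf K i)) <= 2.
Proof. intros HK. rewrite !dq by auto. pose proof (le_INR _ _ HK). simpl INR in H.
  destruct (Nat.leb_spec (S i) K); destruct (Nat.leb_spec (S i) (2*K));
  destruct (Nat.leb_spec (S i) (3*K));
  destruct (Nat.leb_spec (S (S i)) K); destruct (Nat.leb_spec (S (S i)) (2*K));
  destruct (Nat.leb_spec (S (S i)) (3*K)); try lia; conv_nat; apply Rabs_le; split; lra.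
Qed.

Lemma qf_small K n : (n <= K)%nat -> qf K n = 0.
Proof. intros H. unfold qf. destruct (Nat.leb_spec n K); [auto|lia]. Qed.
Lemma qf_big K n : (1 <= K)%nat -> (3*K <= n)%nat -> qf K n = 2 * INR K * (INR K + 1).
Proof. intros HK H. unfold qf. destruct (Nat.leb_spec n K); [lia|].
  destruct (Nat.leb_spec n (2*K)); [lia|]. destruct (Nat.leb_spec n (3*K)).
  - assert (n = 3*K)%nat by lia. subst. rewrite mult_INR. simpl INR. ring.
  - auto. Qed.


Lemma P_tail (x b : nat -> R) m dl dd :
  (forall j, (S m <= j <= S (S (S m)))%nat -> x j = g j * b j) ->
  Rabs (b (S (S m)) - b (S m)) <= dl ->
  Rabs ((b (S (S (S m))) - b (S (S m))) - (b (S (S m)) - b (S m))) <= dd ->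
  P x (S (S m)) <= 4 * (INR (S (S m)) + 1) * (dl + 4/3 * (INR (S (S m)) + 1) * dd + 4 * dl)^2.
Proof. intros Hx Hd1 Hd2.
  pose proof (h_pos (S (S m)) ltac:(lia)) as H1. pose proof (h_pos (S (S (S m))) ltac:(lia)) as H2.
  set (d1 := b (S (S m)) - b (S m)) in *. set (d2 := b (S (S (S m))) - b (S (S m))) in *.
  set (e1 := g (S (S m)) / h (S (S m))). set (e2 := g (S (S (S m))) / h (S (S (S m)))).
  assert (Ha : v x (S (S m)) / h (S (S m)) - v x (S (S (S m))) / h (S (S (S m)))
              = - (d1 + e2 * (d2 - d1) + (e2 - e1) * d1)).
  { unfold v, e1, e2, d1, d2. simpl pred. rewrite !Hx by lia.
    unfold h in *. simpl pred in *. field. split; lra. }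
  unfold P. rewrite Ha.
  pose proof (e_le (S (S m))) as He2. fold e2 in He2. rewrite S_INR in He2.
  pose proof (e_diff (S m)) as He. fold e1 e2 in He.
  assert (He0 : 0 <= e2).
  { unfold e2. apply Rlt_le, Rdiv_lt_0_compat; auto. apply g_pos; lia. }
  assert (Hdl : 0 <= dl) by (pose proof (Rabs_pos d1); lra).
  assert (Hdd : 0 <= dd) by (pose proof (Rabs_pos (d2 - d1)); lra).
  assert (Hab : Rabs (- (d1 + e2 * (d2 - d1) + (e2 - e1) * d1)) <= dl + 4/3 * (INR (S (S m)) + 1) * dd + 4 * dl).
  { rewrite Rabs_Ropp. eapply Rle_trans. apply Rabs_triang.
    eapply Rle_trans. apply Rplus_le_compat_r. apply Rabs_triang.
    rewrite !Rabs_mult. rewrite (Rabs_pos_eq e2) by auto.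
    assert (e2 * Rabs (d2 - d1) <= 4/3 * (INR (S (S m)) + 1) * dd).
    { apply Rmult_le_compat; auto; apply Rabs_pos. }
    assert (Rabs (e2 - e1) * Rabs d1 <= 4 * dl).
    { apply Rmult_le_compat; auto; apply Rabs_pos. }
    lra. }
  destruct (h_bounds (S m)) as [_ Hh1]. destruct (h_bounds (S (S m))) as [_ Hh2].
  assert (Hy : 0 <= INR (S (S m))) by apply pos_INR.
  rewrite (S_INR (S (S m))) in Hh2.
  destruct (sq_facts (INR (S (S m))) Hy) as [Hs1 Hs1'].
  destruct (sq_facts (INR (S (S m)) + 1) ltac:(lra)) as [Hs2 Hs2'].
  assert (Hss : sqrt (INR (S (S m))) <= sqrt (INR (S (S m)) + 1)) by (apply sqrt_le_1_alt; lra).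
  assert (Hhh : h (S (S m)) * h (S (S (S m))) <= 4 * (INR (S (S m)) + 1)) by nra.
  set (Bd := dl + 4/3 * (INR (S (S m)) + 1) * dd + 4 * dl) in *.
  set (z := - (d1 + e2 * (d2 - d1) + (e2 - e1) * d1)) in *.
  assert (Hz : z^2 <= Bd^2).
  { pose proof (Rabs_pos z). replace (z^2) with (Rabs z ^2) by (apply pow2_abs).
    apply pow_incr. split; auto. }
  assert (0 <= z^2) by apply pow2_ge_0.
  apply Rmult_le_compat; try nra. Qed.

Lemma Q_tail (x b : nat -> R) m dl : (2 <= m)%nat ->
  (forall j, (S m <= j <= S (S m))%nat -> x j = g j * b j) ->
  Rabs (b (S (S m)) - b (S m)) <= dl ->
  Q x (S (S m)) <= 2 * INR (S (S m)) * dl^2.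
Proof. intros Hm Hx Hd. unfold Q. simpl pred.
  pose proof (g_pos (S m) ltac:(lia)). pose proof (g_pos (S (S m)) ltac:(lia)).
  rewrite !Hx by lia.
  replace (g (S (S m)) * b (S (S m)) / g (S (S m)) - g (S m) * b (S m) / g (S m)) with
    (b (S (S m)) - b (S m)) by (field; lra).
  pose proof (w_bound m Hm). pose proof (wgg_pos m). simpl pred in H2.
  assert (Hz : (b (S (S m)) - b (S m))^2 <= dl^2).
  { replace ((b (S (S m)) - b (S m))^2) with (Rabs (b (S (S m)) - b (S m)) ^2) by (apply pow2_abs).
    apply pow_incr. split; auto. apply Rabs_pos. }
  apply Rmult_le_compat; try lra. apply pow2_ge_0. Qed.


Definition DK K := 2 * INR K * (INR K + 1).
Definition bf M K n := if (n <? M)%nat then 0 else 1 - qf K n / DK K.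
Definition xf M K n := g n * bf M K n.
Definition binf M n : R := if (n <? M)%nat then 0 else 1.
Definition xinf M n := g n * binf M n.

Lemma DK_pos K : (1 <= K)%nat -> 0 < DK K.
Proof. intros. unfold DK. pose proof (lt_0_INR K ltac:(lia)). nra. Qed.

Lemma bf_small M K n : (n <= K)%nat -> bf M K n = binf M n.
Proof. intros H. unfold bf, binf. rewrite qf_small by auto. destruct (n <? M)%nat; auto.
  unfold Rdiv. ring. Qed.
Lemma xf_small M K n : (n <= K)%nat -> xf M K n = xinf M n.
Proof. intros. unfold xf, xinf. rewrite bf_small; auto. Qed.
Lemma xf_big M K n : (1 <= K)%nat -> (3*K <= n)%nat -> xf M K n = 0.
Proof. intros HK H. unfold xf, bf. destruct (n <? M)%nat. ring.
  rewrite qf_big by auto. fold (DK K). pose proof (DK_pos K HK). field_simplify; lra. Qed.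
Lemma bf_mid M K n : (M <= n)%nat -> bf M K n = 1 - qf K n / DK K.
Proof. intros H. unfold bf. destruct (Nat.ltb_spec n M); [lia|auto]. Qed.

Lemma bf_d1 M K i : (1 <= K)%nat -> (M <= i)%nat -> Rabs (bf M K (S i) - bf M K i) <= / INR K.
Proof. intros HK Hi. rewrite !bf_mid by lia. pose proof (DK_pos K HK).
  replace (1 - qf K (S i) / DK K - (1 - qf K i / DK K)) with (- (qf K (S i) - qf K i) / DK K) by (field; lra).
  rewrite Rabs_div by lra. rewrite Rabs_Ropp, (Rabs_pos_eq (DK K)) by lra.
  pose proof (dq_bound K i HK). pose proof (lt_0_INR K ltac:(lia)).
  apply Rle_div_l; auto. apply (Rle_trans _ (2 * INR K)); auto.
  replace (/ INR K * DK K) with (2 * (INR K + 1)) by (unfold DK; field; lra). lra. Qed.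

Lemma bf_d2 M K i : (1 <= K)%nat -> (M <= i)%nat ->
  Rabs ((bf M K (S (S i)) - bf M K (S i)) - (bf M K (S i) - bf M K i)) <= / (INR K)^2.
Proof. intros HK Hi. rewrite !bf_mid by lia. pose proof (DK_pos K HK).
  replace (1 - qf K (S (S i)) / DK K - (1 - qf K (S i) / DK K) - (1 - qf K (S i) / DK K - (1 - qf K i / DK K)))
   with (- ((qf K (S (S i)) - qf K (S i)) - (qf K (S i) - qf K i)) / DK K) by (field; lra).
  rewrite Rabs_div by lra. rewrite Rabs_Ropp, (Rabs_pos_eq (DK K)) by lra.
  pose proof (d2q_bound K i HK). pose proof (lt_0_INR K ltac:(lia)).
  apply Rle_div_l; auto. apply (Rle_trans _ 2); auto.
  replace (/ INR K ^ 2 * DK K) with (2 * (INR K + 1) / INR K) by (unfold DK; field; lra).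
  apply Rle_div_r; auto. lra. Qed.

Lemma tail_PQ M K m : (2 <= M)%nat -> (M + 2 <= K)%nat -> (K <= S (S m))%nat -> (S (S m) <= 3*K+2)%nat ->
  P (xf M K) (S (S m)) + Q (xf M K) (S (S m)) <= 1944 / INR K.
Proof. intros HM HK H1 H2.
  assert (HK1 : (1 <= K)%nat) by lia.
  pose proof (P_tail (xf M K) (bf M K) m (/ INR K) (/ INR K ^2) ltac:(intros; reflexivity)
    (bf_d1 M K (S m) HK1 ltac:(lia)) (bf_d2 M K (S m) HK1 ltac:(lia))) as HP.
  pose proof (Q_tail (xf M K) (bf M K) m (/ INR K) ltac:(lia) ltac:(intros; reflexivity)
    (bf_d1 M K (S m) HK1 ltac:(lia))) as HQ.
  assert (Hy : INR (S (S m)) + 1 <= 4 * INR K).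
  { assert (S (S (S m)) <= 4 * K)%nat by lia. apply le_INR in H. rewrite mult_INR in H. repeat rewrite S_INR in *. simpl INR in *. lra. }
  assert (Hk : 4 <= INR K) by (replace 4 with (INR 4) by (simpl; ring); apply le_INR; lia).
  set (k := INR K) in *. set (y := INR (S (S m))) in *.
  assert (Hy0 : 0 <= y) by apply pos_INR.
  set (t := / k) in *.
  assert (Ht : k * t = 1) by (unfold t; field; lra).
  assert (Ht0 : 0 < t) by (unfold t; apply Rinv_0_lt_compat; lra).
  replace (/ k ^ 2) with (t * t) in HP by (unfold t; field; lra).
  replace ((/ k) ^ 2) with (t * t) in HQ by (unfold t; field; lra).
  replace (1944 / k) with (1944 * t) by (unfold t, Rdiv; ring).
  assert (Hb : t + 4/3 * (y+1) * (t*t) + 4 * t <= 11 * t).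
  { assert ((y+1) * (t*t) <= 4 * k * (t * t)) by (apply Rmult_le_compat_r; nra). nra. }
  assert (Hb0 : 0 <= t + 4/3 * (y+1) * (t*t) + 4 * t) by nra.
  assert (HP' : P (xf M K) (S (S m)) <= 4 * (4 * k) * (11 * t)^2).
  { eapply Rle_trans. apply HP. apply Rmult_le_compat; try nra. }
  assert (HQ' : Q (xf M K) (S (S m)) <= 2 * (4 * k) * (t ^ 2)).
  { eapply Rle_trans. apply HQ. apply Rmult_le_compat_r. apply pow2_ge_0. lra. }
  assert (k * t * t = t) by (rewrite Ht; ring). nra. Qed.

Lemma P_local x y n : (forall j, (j <= S n)%nat -> x j = y j) -> P x n = P y n.
Proof. intros H. unfold P, v. rewrite !H; auto; destruct n; simpl; lia. Qed.
Lemma Q_local x y n : (forall j, (j <= n)%nat -> x j = y j) -> Q x n = Q y n.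
Proof. intros H. unfold Q. rewrite !H; auto; destruct n; simpl; lia. Qed.

Lemma xf_plateau M K j : (M <= j <= K)%nat -> xf M K j = g j.
Proof. intros H. rewrite xf_small by lia. unfold xinf, binf. destruct (Nat.ltb_spec j M); [lia|ring]. Qed.

Lemma per_term M K k : (2 <= M)%nat -> (M + 2 <= K)%nat -> (S (S k) <= 3*K+2)%nat ->
  P (xf M K) (S (S k)) + Q (xf M K) (S (S k)) <=
  (if (S (S k) <=? M)%nat then P (xinf M) (S (S k)) + Q (xinf M) (S (S k)) else 0) + 1944 / INR K.
Proof. intros HM HK Hk.
  assert (H0 : 0 <= 1944 / INR K) by (apply Rlt_le, Rdiv_lt_0_compat; [lra| apply lt_0_INR; lia]).
  destruct (Nat.leb_spec (S (S k)) M).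
  - rewrite (P_local _ (xinf M)), (Q_local _ (xinf M)); try (intros; apply xf_small; lia). lra.
  - destruct (Nat.leb_spec K (S (S k))).
    + pose proof (tail_PQ M K k HM HK H1 Hk). lra.
    + assert (HP : P (xf M K) (S (S k)) = 0).
      { unfold P, v. simpl pred. rewrite !xf_plateau by lia.
        pose proof (h_pos (S (S k)) ltac:(lia)). pose proof (h_pos (S (S (S k))) ltac:(lia)).
        replace ((g (S (S k)) - g (S k)) / h (S (S k))) with 1 by (unfold h; simpl pred; field; unfold h in *; simpl pred in *; lra).
        replace ((g (S (S (S k))) - g (S (S k))) / h (S (S (S k)))) with 1 by (unfold h; simpl pred; field; unfold h in *; simpl pred in *; lra).
        ring. }
      assert (HQ : Q (xf M K) (S (S k)) = 0).
      { unfold Q. simpl pred. rewrite !xf_plateau by lia.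
        pose proof (g_pos (S (S k)) ltac:(lia)). pose proof (g_pos (S k) ltac:(lia)).
        replace (g (S (S k)) / g (S (S k)) - g (S k) / g (S k)) with 0 by (field; lra). ring. }
      lra. Qed.

Lemma sm_trunc (F : nat -> R) M p : (forall k, 0 <= F k) ->
  sm (fun k => if (S (S k) <=? M)%nat then F k else 0) p <= sm F M.
Proof. intros HF.
  assert (Hm : forall a b, (a <= b)%nat -> sm F a <= sm F b).
  { intros a b Hab. induction Hab. lra. simpl. pose proof (HF m). lra. }
  assert (Hmin : forall p, sm (fun k => if (S (S k) <=? M)%nat then F k else 0) p <= sm F (Nat.min p M)).
  { induction p0. simpl. lra. rewrite sm_S. cbv beta.
    destruct (Nat.leb_spec (S (S p0)) M).
    - replace (Nat.min (S p0) M) with (S (Nat.min p0 M)) by lia. rewrite sm_S.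
      replace (Nat.min p0 M) with p0 in * by lia. lra.
    - pose proof (Hm (Nat.min p0 M) (Nat.min (S p0) M) ltac:(lia)). lra. }
  eapply Rle_trans. apply Hmin. apply Hm. lia. Qed.

Lemma sm_const c n : sm (fun _ => c) n = INR n * c.
Proof. induction n. simpl. ring. rewrite sm_S, IHn, S_INR. ring. Qed.
Lemma sm_split f a m : sm f (a + m) = sm f a + sm (fun k => f (a + k)%nat) m.
Proof. induction m. simpl. rewrite Nat.add_0_r. ring.
  replace (a + S m)%nat with (S (a + m)) by lia. rewrite !sm_S, IHm. ring. Qed.
Lemma sm_le_lt f1 f2 n : (forall k, (k < n)%nat -> f1 k <= f2 k) -> sm f1 n <= sm f2 n.
Proof. intros H. induction n. simpl. lra. rewrite !sm_S. pose proof (H n ltac:(lia)).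
  assert (sm f1 n <= sm f2 n) by (apply IHn; intros; apply H; lia). lra. Qed.
Lemma sm_mono f a b : (forall k, 0 <= f k) -> (a <= b)%nat -> sm f a <= sm f b.
Proof. intros Hf Hab. induction Hab. lra. rewrite sm_S. pose proof (Hf m). lra. Qed.

Definition Hs A m := sm (fun k => / INR (A + k)) m.

Lemma Hs_double B : (1 <= B)%nat -> Hs B B >= 1/2.
Proof. intros HB. pose proof (lt_0_INR B ltac:(lia)).
  assert (Hs B B >= sm (fun _ => / (2 * INR B)) B).
  { apply Rle_ge. apply sm_le_lt. intros k Hk. apply Rinv_le_contravar.
    rewrite plus_INR. pose proof (pos_INR k). lra.
    rewrite plus_INR. apply lt_INR in Hk. lra. }
  rewrite sm_const in H0. replace (INR B * / (2 * INR B)) with (1/2) in H0 by (field; lra). lra. Qed.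

Lemma Hs_pow A j : (1 <= A)%nat -> Hs A (2^j * A - A) >= INR j / 2.
Proof. intros HA. induction j.
  - simpl. replace (A + 0 - A)%nat with 0%nat by lia. simpl. unfold Hs. simpl. lra.
  - pose proof (Nat.pow_nonzero 2 j ltac:(lia)).
    rewrite Nat.pow_succ_r by lia. set (P2 := (2^j)%nat) in *.
    replace (2 * P2 * A - A)%nat with ((P2 * A - A) + P2 * A)%nat by nia.
    unfold Hs in *. rewrite sm_split.
    pose proof (Hs_double (P2 * A) ltac:(nia)). unfold Hs in H0.
    rewrite (sm_ext (fun k => / INR (A + (P2 * A - A + k))) (fun k => / INR (P2 * A + k))).
    2:{ intros k. f_equal. f_equal. nia. }
    rewrite S_INR. lra. Qed.

Definition Cst M := sm (fun k => P (xinf M) (S (S k)) + Q (xinf M) (S (S k))) M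
   + h 1 / h 2 * (v (xinf M) 2)^2 + 7776.

Lemma cost_bound M K : (2 <= M)%nat -> (M + 2 <= K)%nat ->
  sm (fun k => P (xf M K) (S (S k))) (3*K+1) + sm (fun k => Q (xf M K) (S (S k))) (3*K+1)
  + h 1 / h 2 * (v (xf M K) 2)^2 <= Cst M.
Proof. intros HM HK. unfold Cst.
  assert (Hv : v (xf M K) 2 = v (xinf M) 2) by (unfold v; simpl pred; rewrite !xf_small by lia; auto).
  rewrite Hv. rewrite <- sm_plus.
  assert (HS : sm (fun k => P (xf M K) (S (S k)) + Q (xf M K) (S (S k))) (3*K+1) <=
    sm (fun k => if (S (S k) <=? M)%nat then P (xinf M) (S (S k)) + Q (xinf M) (S (S k)) else 0) (3*K+1)
    + INR (3*K+1) * (1944 / INR K)).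
  { rewrite <- sm_const, <- sm_plus. apply sm_le_lt. intros k Hk; apply per_term; lia. }
  pose proof (sm_trunc (fun k => P (xinf M) (S (S k)) + Q (xinf M) (S (S k))) M (3*K+1)
     ltac:(intros k; pose proof (P_nn (xinf M) k); pose proof (Q_nn (xinf M) k); lra)).
  assert (INR (3*K+1) * (1944 / INR K) <= 7776).
  { pose proof (lt_0_INR K ltac:(lia)). rewrite plus_INR, mult_INR. replace (INR 3) with 3 by (simpl; ring). replace (INR 1) with 1 by reflexivity.
    replace ((3 * INR K + 1) * (1944 / INR K)) with (5832 + 1944 / INR K) by (field; lra).
    assert (1 <= INR K) by (replace 1 with (INR 1) by reflexivity; apply le_INR; lia).
    assert (1944 / INR K <= 1944) by (apply Rle_div_l; lra). lra. }
  lra. Qed.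

Lemma fin_series (a : nat -> R) N0 : (forall k, (N0 < k)%nat -> a k = 0) -> is_series a (sum_n a N0).
Proof. intros H. apply lim_series. apply (is_lim_seq_incr_n _ N0).
  apply is_lim_seq_ext with (fun _ => sum_n a N0); [|apply is_lim_seq_const].
  intros n. induction n. reflexivity. rewrite IHn. rewrite !sum_n_sm.
  replace (S (S n + N0)) with (S (S (n + N0))) by lia. rewrite (sm_S a (S (n + N0))).
  rewrite H by lia. ring. Qed.


Lemma rhs_lower M K : (2 <= M)%nat -> (M + 2 <= K)%nat ->
  sm (fun k => rho2 (S (S k)) * xf M K (S (S k))^2) (3*K+1) >= 9/128 * Hs (M+1) (K - M).
Proof. intros HM HK.
  set (f := fun k => rho2 (S (S k)) * xf M K (S (S k))^2).
  assert (Hf : forall k, 0 <= f k).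
  { intros k. unfold f. pose proof (rho_pos k). apply Rmult_le_pos; [lra|apply pow2_ge_0]. }
  assert (H1 : sm f (M - 1 + (K - M)) <= sm f (3*K+1)) by (apply sm_mono; auto; lia).
  rewrite sm_split in H1. pose proof (sm_nn f (M-1) Hf).
  assert (H2 : 9/128 * Hs (M+1) (K - M) <= sm (fun k => f (M - 1 + k)%nat) (K - M)).
  { unfold Hs. rewrite <- sm_scal. apply sm_le_lt. intros k Hk. unfold f.
    replace (S (S (M - 1 + k))) with (S (S (M - 1 + k))) by reflexivity.
    rewrite xf_plateau by lia.
    pose proof (rho_lower (M - 1 + k) ltac:(lia)).
    replace (M + 1 + k)%nat with (S (S (M - 1 + k))) by lia. unfold Rdiv in H0. lra. }
  lra. Qed.

Lemma lhs_real (x : nat -> R) k : lhs_seq (fun n => RtoC (x n)) k = (L x (S k))^2.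
Proof. rewrite lhs_split. unfold L, re, im. simpl. ring. Qed.
Lemma rhs_real (x : nat -> R) k : rhs_seq (fun n => RtoC (x n)) k = rho2 (S (S k)) * x (S (S k))^2.
Proof. rewrite rhs_split. unfold re, im. simpl. ring. Qed.

Lemma series_vals M K : (2 <= M)%nat -> (M + 2 <= K)%nat ->
  let u := fun n => RtoC (xf M K n) in
  Series (lhs_seq u) = sm (fun k => (L (xf M K) (S k))^2) (S (3*K+1)) /\
  Series (rhs_seq u) = sm (fun k => rho2 (S (S k)) * xf M K (S (S k))^2) (3*K+1).
Proof. intros HM HK u. split.
  - assert (Hz : forall k, (3*K+1 < k)%nat -> lhs_seq u k = 0).
    { intros k Hk. unfold u. rewrite lhs_real. unfold L. simpl pred.
      rewrite !xf_big by lia. ring. }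
    rewrite (is_series_unique _ _ (fin_series _ (3*K+1) Hz)).
    rewrite sum_n_sm. apply sm_ext. intros k. apply lhs_real.
  - assert (Hz : forall k, (3*K+1 < k)%nat -> rhs_seq u k = 0).
    { intros k Hk. unfold u. rewrite rhs_real. rewrite xf_big by lia. ring. }
    rewrite (is_series_unique _ _ (fin_series _ (3*K+1) Hz)).
    rewrite sum_n_sm. rewrite (sm_ext _ (fun k => rho2 (S (S k)) * xf M K (S (S k))^2)).
    2:{ intros k. apply rhs_real. }
    rewrite sm_S. rewrite (xf_big M K (S (S (3*K+1)))) by lia. ring. Qed.

Lemma cost_eq M K : (2 <= M)%nat -> (M + 2 <= K)%nat ->
  sm (fun k => (L (xf M K) (S k))^2) (S (3*K+1)) =
  sm (fun k => rho2 (S (S k)) * xf M K (S (S k))^2) (3*K+1)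
  + (sm (fun k => P (xf M K) (S (S k))) (3*K+1) + sm (fun k => Q (xf M K) (S (S k))) (3*K+1)
  + h 1 / h 2 * (v (xf M K) 2)^2).
Proof. intros HM HK.
  assert (H0 : xf M K 0 = 0) by (unfold xf, bf; destruct (Nat.ltb_spec 0 M); [ring|lia]).
  assert (H1 : xf M K 1 = 0) by (unfold xf, bf; destruct (Nat.ltb_spec 1 M); [ring|lia]).
  rewrite (identity _ H0 H1).
  assert (HB : B (xf M K) (3*K+1) = 0).
  { unfold B, v. simpl pred. rewrite !xf_big by lia. ring. }
  rewrite HB. ring. Qed.

Lemma upper M : (2 <= M)%nat -> forall eps, 0 < eps -> exists u : nat -> C,
  inH0 M u /\ (exists n, u n <> 0%C) /\ Series (lhs_seq u) / Series (rhs_seq u) <= 1 + eps.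
Proof. intros HM eps He.
  assert (HC : 0 < Cst M).
  { unfold Cst. pose proof (sm_nn (fun k => P (xinf M) (S (S k)) + Q (xinf M) (S (S k))) M
      ltac:(intros k; pose proof (P_nn (xinf M) k); pose proof (Q_nn (xinf M) k); lra)).
    pose proof (extra_nn (xinf M)). lra. }
  destruct (INR_unbounded (256 * Cst M / (9 * eps) + 1)) as [j Hj].
  assert (Hj1 : (1 <= j)%nat).
  { destruct j. simpl in Hj. assert (0 < 256 * Cst M / (9 * eps)) by (apply Rdiv_lt_0_compat; lra). lra. lia. }
  pose proof (Nat.pow_nonzero 2 j ltac:(lia)).
  assert (H2j : (2 <= 2^j)%nat).
  { destruct j; [lia|]. pose proof (Nat.pow_nonzero 2 j ltac:(lia)). rewrite Nat.pow_succ_r by lia. lia. }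
  set (K := (2^j * (M+1) - 1)%nat).
  assert (HK : (M + 2 <= K)%nat) by (unfold K; nia).
  exists (fun n => RtoC (xf M K n)).
  destruct (series_vals M K HM HK) as [EL ER].
  split; [split|split].
  - apply (ex_series_ext (fun n => (Cmod (RtoC (xf M K n)))^2)); [reflexivity|].
    exists (sum_n (fun n => (Cmod (RtoC (xf M K n)))^2) (3*K)).
    apply fin_series. intros k Hk. rewrite xf_big by lia. rewrite Cmod_0. ring.
  - intros n Hn. unfold xf, bf. destruct (Nat.ltb_spec n M); [|lia]. rewrite Rmult_0_r. reflexivity.
  - exists M. rewrite xf_plateau by lia. pose proof (g_pos M ltac:(lia)). intros Heq.
    apply (f_equal fst) in Heq. simpl in Heq. lra.
  - rewrite EL, ER, (cost_eq M K HM HK).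
    pose proof (cost_bound M K HM HK) as Hcost.
    pose proof (rhs_lower M K HM HK) as Hlow.
    replace (K - M)%nat with (2^j * (M+1) - (M+1))%nat in Hlow by (unfold K; nia).
    pose proof (Hs_pow (M+1) j ltac:(lia)) as Hh.
    set (R0 := sm (fun k => rho2 (S (S k)) * xf M K (S (S k))^2) (3*K+1)) in *.
    set (C0 := sm (fun k => P (xf M K) (S (S k))) (3*K+1) + sm (fun k => Q (xf M K) (S (S k))) (3*K+1)
      + h 1 / h 2 * (v (xf M K) 2)^2) in *.
    assert (HR : R0 >= 9/256 * INR j) by lra.
    assert (HR2 : R0 * eps >= Cst M).
    { assert (9/256 * INR j * eps >= Cst M).
      { assert (INR j * (9 * eps) >= 256 * Cst M).
        { assert (Hq : 256 * Cst M / (9 * eps) * (9 * eps) = 256 * Cst M) by (field; lra).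
          nra. }
        nra. }
      nra. }
    assert (HR0 : 0 < R0) by nra.
    apply Rle_div_l; auto. nra. Qed.


Lemma rhs_ex2 (u : nat -> C) : inH0 2 u -> ex_series (rhs_seq u).
Proof. intros Hu. destruct (u01 u Hu) as [H0 H1].
  assert (Hl : ex_series (lhs_seq u)) by (apply lhs_ex; apply Hu).
  set (SL := Series (lhs_seq u)).
  assert (HL : is_series (lhs_seq u) SL) by (apply Series_correct; auto).
  assert (Hb : forall N, sum_n (rhs_seq u) N <= SL).
  { intros N. apply (Rle_trans _ _ _ (partial_ineq u H0 H1 N)). apply ps_le_lim; auto. apply lhs_nn. }
  destruct (ex_finite_lim_seq_incr (sum_n (rhs_seq u)) SL) as [l Hl'].
  - intros n. rewrite sum_Sn. pose proof (rhs_nn u (S n)). change (plus (sum_n (rhs_seq u) n) (rhs_seq u (S n))) with (sum_n (rhs_seq u) n + rhs_seq u (S n)). lra.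
  - auto.
  - exists l. apply lim_series. auto. Qed.

Lemma inH0_2 M (u : nat -> C) : (2 <= M)%nat -> inH0 M u -> inH0 2 u.
Proof. intros HM [H1 H2]. split; auto. intros n Hn. apply H2. lia. Qed.

Lemma lower M (u : nat -> C) : (2 <= M)%nat -> inH0 M u -> (exists n, u n <> 0%C) ->
  1 <= Series (lhs_seq u) / Series (rhs_seq u).
Proof. intros HM Hu [n Hn].
  pose proof (inH0_2 M u HM Hu) as Hu2.
  assert (HnM : (M <= n)%nat).
  { destruct (Nat.le_gt_cases M n); auto. exfalso. apply Hn. apply Hu. auto. }
  destruct n as [|[|k]]; try lia.
  pose proof (rhs_ex2 u Hu2) as Hr.
  assert (Hpos : 0 < rhs_seq u k).
  { unfold rhs_seq. pose proof (rho_pos k). apply Cmod_gt_0 in Hn.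
    apply Rmult_lt_0_compat; auto. apply pow_lt; auto. }
  assert (HS : rhs_seq u k <= Series (rhs_seq u)).
  { apply (Rle_trans _ (sum_n (rhs_seq u) k)).
    - rewrite sum_n_sm. apply (sm_ge_term (rhs_seq u) (S k) k (rhs_nn u)). lia.
    - apply ps_le_lim. apply rhs_nn. apply Series_correct; auto. }
  pose proof (part_i u Hu2).
  apply Rle_div_r; lra. Qed.


Theorem theorem1p1 :
  (* (i) Rellich-type inequality on H_0^2 *)
  (forall u : nat -> C, inH0 2 u ->
     Series (lhs_seq u) >= Series (rhs_seq u)) /\
  (* (ii) non-attainability *)
  (forall u : nat -> C, u 0%nat = 0%C -> u 1%nat = 0%C ->
     ex_series (rhs_seq u) ->
     is_series (lhs_seq u) (Series (rhs_seq u)) ->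
     forall n, u n = 0%C) /\
  (* (iii) optimality near infinity *)
  (forall M : nat, (2 <= M)%nat ->
     Glb_Rbar (fun r : R => exists u : nat -> C,
                 inH0 M u /\ (exists n, u n <> 0%C) /\
                 r = Series (lhs_seq u) / Series (rhs_seq u))
     = Finite 1).
Proof.
  split; [exact part_i|split; [exact part_ii|]].
  intros M HM. apply is_glb_Rbar_unique. split.
  - intros r [u [Hu [Hn Hr]]]. subst r. simpl. apply (lower M); auto.
  - intros b Hb. destruct b as [b| |]; simpl; auto.
    + destruct (Rle_lt_dec b 1) as [Hle|Hlt]; auto.
      destruct (upper M HM ((b - 1)/2) ltac:(lra)) as [u [Hu [Hn Hr]]].
      pose proof (Hb _ (ex_intro _ u (conj Hu (conj Hn eq_refl)))). simpl in H. lra.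
    + destruct (upper M HM 1 ltac:(lra)) as [u [Hu [Hn Hr]]].
      exact (Hb _ (ex_intro _ u (conj Hu (conj Hn eq_refl)))).
Qed.
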